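(* Let $\mathcal{O}_K$ be a discrete valuation ring with fraction field $K$ and valuation $v_K$, let $L/K$ be a finite separable extension of degree $n$ with a Hopf Galois structure $(H,\langle\,,\rangle)$, let $W$ be a $K$-basis of $H$ and $B=\{\gamma_j\}_{j=1}^n$ an $\mathcal{O}_K$-basis of $\mathcal{O}_L$. Let $\beta\in\mathcal{O}_L$. Then $\beta$ is a free generator of $\mathcal{O}_L$ as $\mathfrak{A}_H$-module (i.e. the map $\mathfrak{A}_H\to\mathcal{O}_L$, $h\mapsto\langle h,\beta\rangle$, is a bijection) if and only if $$v_K\big(\det M_\beta(H_W,L_B)\big)=I_W(H,L).$$
   Context: A Hopf Galois structure on $L/K$ is a $K$-Hopf algebra $H$ with a $K$-linear action $\langle\,,\rangle\colon H\otimes_K L\to L$ making $L$ an $H$-module algebra such that $L\otimes_K H\to\mathrm{End}_K(L)$ is bijective. The associated order is $\mathfrak{A}_H=\{h\in H:\langle h,x\rangle\in\mathcal{O}_L\ \forall x\in\mathcal{O}_L\}$. With $W=\{w_i\}$, write $\langle w_i,\gamma_j\rangle=\sum_k m_{ij}^{(k)}\gamma_k$; the matrix of the action $M(H_W,L_B)\in\mathcal{M}_{n^2\times n}(K)$ has entry $m_{ij}^{(k)}$ in row $n(j-1)+k$, column $i$. A reduced matrix of it is $D\in\mathrm{GL}_n(K)$ such that $U M(H_W,L_B)=\begin{pmatrix}D\\0\end{pmatrix}$ for some $U\in\mathrm{GL}_{n^2}(\mathcal{O}_K)$; such $D$ exists, and the index $I_W(H,L):=v_K(\det D)$ does not depend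 on the choice of $D$. For $\beta\in L$, $M_\beta(H_W,L_B)\in\mathcal{M}_n(K)$ is the matrix of the $K$-linear map $H\to L$, $h\mapsto\langle h,\beta\rangle$, with respect to the bases $W$ and $B$. *)

(* Defs.v *)
From HB Require Import structures.
From mathcomp Require Import all_boot all_order all_algebra all_field.
Set Implicit Arguments. Unset Strict Implicit. Unset Printing Implicit Defensive.
Import Order.TTheory GRing.Theory Num.Theory.
Local Open Scope ring_scope.

(* ---------- the base: a DVR O_K with fraction field K, given by its
   normalized discrete valuation v_K : K^* -> Z (the value at 0 is
   irrelevant: v_K 0 = +oo is handled explicitly below). ---------- *)
Record is_dval (K : fieldType) (v : K -> int) : Prop := {
  dval_mul : forall x y, x != 0 -> y != 0 -> v (x * y) = v x + v y;
  dval_add : forall x y, x != 0 -> y != 0 -> x + y != 0 ->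
               Num.min (v x) (v y) <= v (x + y);
  dval_surj : forall z : int, exists x, x != 0 /\ v x = z }.

Definition OK (K : fieldType) (v : K -> int) : pred K :=
  fun x => (x == 0) || (0 <= v x).

Definition OL (K : fieldType) (v : K -> int) (L : fieldExtType K) (x : L) : Prop :=
  exists p : {poly K},
    [/\ p \is monic, forall i, p`_i \in OK v & root (map_poly (in_alg L) p) x].

Definition OK_basis (K : fieldType) (v : K -> int) (L : fieldExtType K) n
    (B : n.-tuple L) : Prop :=
  [/\ forall j, OL v (tnth B j),
      forall x, OL v x -> exists a : 'I_n -> K,
         (forall j, a j \in OK v) /\ x = \sum_j a j *: tnth B j
    & forall a : 'I_n -> K, (forall j, a j \in OK v) ->
         \sum_j a j *: tnth B j = 0 -> forall j, a j = 0].

(* H is a finite-dimensional K-algebra; the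
   tensor square H (x)_K H is represented by coordinate matrices with
   respect to the canonical basis e = vbasis {:H}:
   t : 'M_d  stands for  \sum_{i,j} t i j  e_i (x) e_j. ---------- *)
Section Hopf.
Variables (K : fieldType) (H : falgType K).
Local Notation d := (\dim (fullv : {vspace H})).
Local Notation e := (vbasis (fullv : {vspace H})).

(* image of a tensor under the bilinear map induced by f *)
Definition tsum (V : lmodType K) (t : 'M[K]_d) (f : H -> H -> V) : V :=
  \sum_(i < d) \sum_(j < d) t i j *: f (tnth e i) (tnth e j).

Definition is_linearK (V W : lmodType K) (f : V -> W) : Prop :=
  forall (a : K) x y, f (a *: x + y) = a *: f x + f y.

Record is_Hopf (Delta : H -> 'M[K]_d) (eps : H -> K) (S : H -> H) : Prop := {
  Delta_lin : is_linearK Delta;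
  eps_lin : is_linearK (eps : H -> K^o);
  S_lin : is_linearK S;
  (* coassociativity: (Delta (x) id) Delta = (id (x) Delta) Delta *)
  coassoc : forall h k l m,
    \sum_(i < d) Delta h i m * Delta (tnth e i) k l =
    \sum_(j < d) Delta h k j * Delta (tnth e j) l m;
  counitl : forall h, tsum (Delta h) (fun a b => eps a *: b) = h;
  counitr : forall h, tsum (Delta h) (fun a b => eps b *: a) = h;
  (* Delta and eps are algebra maps *)
  Delta1 : forall p q, Delta 1 p q = coord e p 1 * coord e q 1;
  DeltaM : forall g h p q, Delta (g * h) p q =
    \sum_(i < d) \sum_(j < d) \sum_(k < d) \sum_(l < d)
       Delta g i j * Delta h k l *
       coord e p (tnth e i * tnth e k) * coord e q (tnth e j * tnth e l);
  eps1 : eps 1 = 1;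
  epsM : forall g h, eps (g * h) = eps g * eps h;
  antipodel : forall h, tsum (Delta h) (fun a b => S a * b) = eps h *: 1;
  antipoder : forall h, tsum (Delta h) (fun a b => a * S b) = eps h *: 1 }.

Record HopfGalois (L : fieldExtType K) (Delta : H -> 'M[K]_d) (eps : H -> K)
    (S : H -> H) (act : H -> L -> L) : Prop := {
  HG_Hopf : is_Hopf Delta eps S;
  act_linl : forall x, is_linearK (fun h => act h x);
  act_linr : forall h, is_linearK (act h);
  act1 : forall x, act 1 x = x;
  actM : forall g h x, act (g * h) x = act g (act h x);
  act_mul : forall h x y, act h (x * y) = tsum (Delta h) (fun a b => act a x * act b y);
  act_one : forall h, act h 1 = eps h *: 1;
  (* L (x)_K H -> End_K(L), x (x) h |-> (y |-> x <h,y>) is bijective;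
     elements of L (x) H are written uniquely as \sum_i x_i (x) e_i *)
  HG_surj : forall f : 'End(L), exists x : 'I_d -> L,
      forall y, f y = \sum_(i < d) x i * act (tnth e i) y;
  HG_inj : forall x : 'I_d -> L,
      (forall y, \sum_(i < d) x i * act (tnth e i) y = 0) -> forall i, x i = 0 }.

End Hopf.

Definition assoc_order (K : fieldType) (v : K -> int) (L : fieldExtType K)
    (H : falgType K) (act : H -> L -> L) (h : H) : Prop :=
  forall x, OL v x -> OL v (act h x).

Definition free_generator (K : fieldType) (v : K -> int) (L : fieldExtType K)
    (H : falgType K) (act : H -> L -> L) (beta : L) : Prop :=
  [/\ forall h, assoc_order v act h -> OL v (act h beta),
      forall h1 h2, assoc_order v act h1 -> assoc_order v act h2 ->
         act h1 beta = act h2 beta -> h1 = h2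
    & forall y, OL v y -> exists2 h, assoc_order v act h & act h beta = y].

(* matrix of the action M(H_W, L_B) in M_{n^2 x n}(K): entry m_ij^(k)
   (with <w_i, gamma_j> = \sum_k m_ij^(k) gamma_k) in row n*j + k
   (0-based; = mxvec_index j k), column i *)
Definition action_matrix (K : fieldType) (L : fieldExtType K) (H : falgType K)
    (act : H -> L -> L) n (W : n.-tuple H) (B : n.-tuple L) : 'M[K]_(n * n, n) :=
  \matrix_(r, i) mxvec (\matrix_(j < n, k < n) coord B k (act (tnth W i) (tnth B j))) 0 r.

Definition Mbeta (K : fieldType) (L : fieldExtType K) (H : falgType K)
    (act : H -> L -> L) n (W : n.-tuple H) (B : n.-tuple L) (beta : L) : 'M[K]_n :=
  \matrix_(k, i) coord B k (act (tnth W i) beta).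

Lemma leq_n_nn n : (n <= n * n)%N.
Proof. by case: n => // n; rewrite leq_pmulr. Qed.

Definition GL_OK (K : fieldType) (v : K -> int) m (U : 'M[K]_m) : Prop :=
  [/\ U \in unitmx, forall i j, U i j \in OK v & forall i j, invmx U i j \in OK v].

Definition reduced_matrix (K : fieldType) (v : K -> int) n
    (M : 'M[K]_(n * n, n)) (D : 'M[K]_n) : Prop :=
  D \in unitmx /\ exists U : 'M[K]_(n * n), GL_OK v U /\
    U *m M = castmx (subnKC (leq_n_nn n), erefl n) (col_mx D (0 : 'M_(n * n - n, n))).

(* Main.v *)
Require Import Defs.
From HB Require Import structures.
From mathcomp Require Import all_boot all_order all_algebra all_field fingroup perm.
From mathcomp Require Import zify ring.
From Stdlib Require Import ClassicalEpsilon.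
Set Implicit Arguments. Unset Strict Implicit. Unset Printing Implicit Defensive.
Import Order.TTheory GRing.Theory Num.Theory.
Local Open Scope ring_scope.

Lemma v1 (K : fieldType) (v : K -> int) : is_dval v -> v 1 = 0.
Proof.
move=> hv; have := dval_mul hv (oner_neq0 K) (oner_neq0 K).
rewrite mulr1 => h.
by apply: (@addrI _ (v 1)); rewrite addr0 -h.
Qed.

Lemma vN1 (K : fieldType) (v : K -> int) : is_dval v -> v (-1) = 0.
Proof.
move=> hv; have hn : (-1 : K) != 0 by rewrite oppr_eq0 oner_neq0.
have := dval_mul hv hn hn; rewrite mulrNN mulr1 (v1 hv) => h.
by move: h; move: (v (-1)) => a h; lia.
Qed.

Lemma vN (K : fieldType) (v : K -> int) x : is_dval v -> x != 0 -> v (- x) = v x.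
Proof.
move=> hv hx; have hn : (-1 : K) != 0 by rewrite oppr_eq0 oner_neq0.
by rewrite -mulN1r (dval_mul hv hn hx) (vN1 hv) add0r.
Qed.

Lemma vV (K : fieldType) (v : K -> int) x : is_dval v -> x != 0 -> v (x^-1) = - v x.
Proof.
move=> hv hx; have hi : x^-1 != 0 by rewrite invr_eq0.
have := dval_mul hv hx hi; rewrite mulfV // (v1 hv) => h.
by apply: (@addrI _ (v x)); rewrite addrN h.
Qed.

Lemma OK0 (K : fieldType) (v : K -> int) : (0 : K) \in OK v.
Proof. by rewrite /OK unfold_in /= eqxx. Qed.

Lemma OKP (K : fieldType) (v : K -> int) x : (x \in OK v) = (x == 0) || (0 <= v x).
Proof. by rewrite /OK unfold_in. Qed.

Lemma OK1 (K : fieldType) (v : K -> int) : is_dval v -> (1 : K) \in OK v.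
Proof. by move=> hv; rewrite OKP (v1 hv) lexx orbT. Qed.

Lemma OKN (K : fieldType) (v : K -> int) x : is_dval v -> x \in OK v -> - x \in OK v.
Proof.
move=> hv; rewrite !OKP oppr_eq0; case: eqP => //= /eqP hx.
by rewrite vN.
Qed.

Lemma OKD (K : fieldType) (v : K -> int) x y : is_dval v ->
  x \in OK v -> y \in OK v -> x + y \in OK v.
Proof.
move=> hv; rewrite !OKP.
have [->|hx] := eqVneq x 0; first by rewrite add0r.
have [->|hy] := eqVneq y 0; first by rewrite addr0 (negbTE hx).
have [hxy0|hxy] := eqVneq (x + y) 0; first by rewrite hxy0.
move=> /= h1 h2; have := dval_add hv hx hy hxy.
rewrite /Num.min; case: ifP => _ h; exact: le_trans h.
Qed.

Lemma OKM (K : fieldType) (v : K -> int) x y : is_dval v ->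
  x \in OK v -> y \in OK v -> x * y \in OK v.
Proof.
move=> hv; rewrite !OKP mulf_eq0.
have [->|hx] := eqVneq x 0; first by [].
have [->|hy] := eqVneq y 0; first by rewrite orbT.
move=> /= h1 h2; rewrite (dval_mul hv hx hy); exact: addr_ge0.
Qed.

Lemma OKB (K : fieldType) (v : K -> int) x y : is_dval v ->
  x \in OK v -> y \in OK v -> x - y \in OK v.
Proof. by move=> hv hx hy; apply: OKD => //; apply: OKN. Qed.

Lemma OKnat (K : fieldType) (v : K -> int) (k : nat) : is_dval v -> k%:R \in OK v.
Proof.
move=> hv; elim: k => [|k IH]; first exact: OK0.
by rewrite mulrS; apply: OKD => //; apply: OK1.
Qed.

Lemma OKsum (K : fieldType) (v : K -> int) (I : Type) (r : seq I) (P : pred I) (F : I -> K) :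
  is_dval v -> (forall i, P i -> F i \in OK v) -> \sum_(i <- r | P i) F i \in OK v.
Proof.
move=> hv hF; apply: (big_ind (fun x => x \in OK v)) => //; first exact: OK0.
by move=> x y; apply: OKD.
Qed.

Lemma OKprod (K : fieldType) (v : K -> int) (I : Type) (r : seq I) (P : pred I) (F : I -> K) :
  is_dval v -> (forall i, P i -> F i \in OK v) -> \prod_(i <- r | P i) F i \in OK v.
Proof.
move=> hv hF; apply: (big_ind (fun x => x \in OK v)) => //; first exact: OK1.
by move=> x y; apply: OKM.
Qed.

Lemma OKX (K : fieldType) (v : K -> int) x (k : nat) : is_dval v -> x \in OK v -> x ^+ k \in OK v.
Proof.
move=> hv hx; elim: k => [|k IH]; first by rewrite expr0 OK1.
by rewrite exprS OKM.
Qed.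

Lemma unif (K : fieldType) (v : K -> int) : is_dval v -> exists pi : K, pi != 0 /\ v pi = 1.
Proof. by move=> hv; have [x [h1 h2]] := dval_surj hv 1; exists x. Qed.

Lemma vX (K : fieldType) (v : K -> int) x (k : nat) : is_dval v -> x != 0 ->
  v (x ^+ k) = (k%:Z) * v x.
Proof.
move=> hv hx; elim: k => [|k IH]; first by rewrite expr0 (v1 hv) mul0r.
by rewrite exprS dval_mul ?expf_neq0 // IH intS mulrDl mul1r.
Qed.

Lemma scale_OK (K : fieldType) (v : K -> int) (pi : K) (I : finType) (f : I -> K) :
  is_dval v -> pi != 0 -> v pi = 1 ->
  exists k : nat, forall i, pi ^+ k * f i \in OK v.
Proof.
move=> hv hpi vpi; exists (\max_i `|v (f i)|%N) => i.
rewrite OKP mulf_eq0 expf_eq0 (negbTE hpi) andbF /=.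
have [->|hf] := eqVneq (f i) 0; first by [].
rewrite dval_mul ?expf_neq0 // vX // vpi mulr1 /=.
have := @leq_bigmax _ (fun i => `|v (f i)|%N) i.
move: (\max_i `|v (f i)|)%N => k; lia.
Qed.

Lemma det_closed (R : comNzRingType) (S : R -> Prop) :
  S 1 -> (forall x, S x -> S (- x)) -> (forall x y, S x -> S y -> S (x + y)) ->
  (forall x y, S x -> S y -> S (x * y)) ->
  forall m (A : 'M[R]_m), (forall i j, S (A i j)) -> S (\det A).
Proof.
move=> S1 SN SD SM m A SA.
have S0 : S 0 by rewrite -(subrr 1); apply: SD => //; apply: SN.
rewrite /determinant; apply: (big_ind S) => // s _.
apply: (SM); first by case: (perm.odd_perm s); rewrite ?expr1 ?expr0 //; apply: SN.
by apply: (big_ind S) => //.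
Qed.

Definition isOp (K : fieldType) (v : K -> int) (p : {poly K}) := forall i, p`_i \in OK v.

Lemma char_poly_OK (K : fieldType) (v : K -> int) m (A : 'M[K]_m) :
  is_dval v -> (forall i j, A i j \in OK v) -> isOp v (char_poly A).
Proof.
move=> hv hA; rewrite /char_poly.
apply: (det_closed (S := isOp v)).
- by move=> i; rewrite coef1 OKnat.
- by move=> p hp i; rewrite coefN OKN.
- by move=> p q hp hq i; rewrite coefD OKD.
- by move=> p q hp hq i; rewrite coefM OKsum // => j _; rewrite OKM.
- move=> i j k; rewrite !mxE coefB coefMn coefX coefC.
  apply: OKB => //; first by case: (i == j); rewrite ?mulr1n ?mulr0n ?OKnat ?OK0.
  by case: (k == 0)%N; rewrite ?OK0.
Qed.

Lemma dettrick (K : fieldType) (v : K -> int) (L : fieldExtType K) m (A : 'M[K]_m)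
  (g : 'I_m -> L) (i0 : 'I_m) (z : L) : is_dval v ->
  (forall i j, A i j \in OK v) -> g i0 = 1 ->
  (forall i, z * g i = \sum_j A i j *: g j) -> OL v z.
Proof.
move=> hv hA hg0 hz; exists (char_poly A); split.
- exact: char_poly_monic.
- exact: char_poly_OK.
rewrite /root.
have -> : (map_poly (in_alg L) (char_poly A)).[z] = horner_alg z (char_poly A) by [].
rewrite /char_poly -det_map_mx.
set C := map_mx _ _.
have hC : C *m (\col_i g i) = 0.
  apply/matrixP => i k; rewrite !mxE.
  have -> : \sum_j C i j * (\col_i0 g i0) j k = z * g i - \sum_j A i j *: g j.
    rewrite (bigD1 i) //= /C !mxE eqxx mulr1n rmorphB /= horner_algX horner_algC.
    rewrite mulrBl mulr_algl.
    rewrite [X in _ = _ - X](bigD1 i) //= opprD addrA; congr (_ + _).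
    rewrite -sumrN; apply: eq_bigr => j hj.
    rewrite !mxE eq_sym (negbTE hj) mulr0n rmorphB rmorph0 /= horner_algC.
    by rewrite sub0r mulNr mulr_algl.
  by rewrite hz subrr.
have : \det C *: (\col_i g i) = 0.
  by rewrite -mul_scalar_mx -mul_adj_mx -mulmxA hC mulmx0.
move/matrixP => /(_ i0 0); rewrite !mxE hg0 mulr1 => ->; exact: eqxx.
Qed.

Lemma dettrickT (K : fieldType) (v : K -> int) (L : fieldExtType K) (I : finType)
  (A : I -> I -> K) (g : I -> L) (i0 : I) (z : L) : is_dval v ->
  (forall i j, A i j \in OK v) -> g i0 = 1 ->
  (forall i, z * g i = \sum_j A i j *: g j) -> OL v z.
Proof.
move=> hv hA hg0 hz.
apply: (@dettrick K v L _ (\matrix_(a, b) A (enum_val a) (enum_val b))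
   (fun a => g (enum_val a)) (enum_rank i0)) => //.
- by move=> a b; rewrite mxE.
- by rewrite enum_rankK.
move=> a; rewrite hz [RHS](reindex enum_rank) /=.
  by apply: eq_bigr => b _; rewrite mxE !enum_rankK.
by apply: onW_bij; exists enum_val; [exact: enum_rankK | exact: enum_valK].
Qed.

Lemma OL0 (K : fieldType) (v : K -> int) (L : fieldExtType K) : is_dval v -> OL v (0 : L).
Proof.
move=> hv; exists 'X; split; first exact: monicX.
  by move=> i; rewrite coefX OKnat.
by rewrite map_polyX /root hornerX.
Qed.

Lemma red_poly (K : fieldType) (v : K -> int) (L : fieldExtType K) (x : L) (p : {poly K}) :
  is_dval v -> p \is monic -> isOp v p -> horner_alg x p = 0 -> (1 < size p)%N ->
  forall a : nat, exists q : {poly K},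
    [/\ isOp v q, (size q <= (size p).-1)%N & horner_alg x q = x ^+ a].
Proof.
move=> hv hm hp hr hs; elim=> [|a [q [hq hsq hxq]]].
  exists 1; split; first by move=> i; rewrite coef1 OKnat.
    by rewrite size_poly1; lia.
  by rewrite rmorph1 expr0.
set c := ('X * q)`_(size p).-1.
exists ('X * q - c *: p); split.
- move=> i; rewrite coefB coefXM coefZ; apply: OKB => //.
    by case: (i == 0)%N; rewrite ?OK0 ?hq.
  by rewrite OKM // /c coefXM; case: ((size p).-1 == 0)%N; rewrite ?OK0 ?hq.
- apply/leq_sizeP => j hj; rewrite coefB coefXM coefZ.
  have hl : p`_(size p).-1 = 1 by rewrite -lead_coefE; apply/monicP.
  move: hj; rewrite leq_eqVlt => /orP [/eqP <-|hj].
    by rewrite /c coefXM hl mulr1 subrr.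
  have -> : p`_j = 0 by apply/(leq_sizeP _ _ (leqnn _)); lia.
  case: (j =P 0)%N => [hj0|_]; first by lia.
  have -> : q`_j.-1 = 0 by apply/(leq_sizeP _ _ hsq); lia.
  by rewrite mulr0 subr0.
- by rewrite rmorphB rmorphM /= horner_algX linearZ /= hr mulr0 subr0 hxq exprS.
Qed.

Lemma OL_red (K : fieldType) (v : K -> int) (L : fieldExtType K) (x : L) :
  is_dval v -> OL v x -> exists d : nat, (0 < d)%N /\ forall a : nat,
   exists c : 'I_d -> K, (forall i, c i \in OK v) /\ x ^+ a = \sum_i c i *: x ^+ i.
Proof.
move=> hv [p [hm hp hr]].
have hr' : horner_alg x p = 0 by apply/eqP.
have hs : (1 < size p)%N.
  case: ltnP => // hs; move: hr'.
  have hp1 : p = 1.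
    move/size1_polyC: hs => hpc; move/monicP: hm; rewrite hpc lead_coefC => ->. done.
  by rewrite hp1 rmorph1 => /eqP; rewrite oner_eq0.
exists (size p).-1; split; first lia.
move=> a; have [q [hq hsq hxq]] := red_poly hv hm hp hr' hs a.
exists (fun i => q`_i); split => //.
rewrite -hxq.
have -> : horner_alg x q = (map_poly (in_alg L) q).[x] by [].
rewrite (horner_coef_wide (n := (size p).-1)); last by rewrite size_map_poly.
by apply: eq_bigr => i _; rewrite coef_map /= mulr_algl.
Qed.

Lemma OL_fun (K : fieldType) (v : K -> int) (L : fieldExtType K) (x : L) :
  is_dval v -> OL v x -> exists d : nat, (0 < d)%N /\ exists c : nat -> 'I_d -> K,
   forall a, (forall i, c a i \in OK v) /\ x ^+ a = \sum_i c a i *: x ^+ i.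
Proof.
move=> hv hx; have [d [hd hc]] := OL_red hv hx.
exists d; split => //.
exists (fun a => proj1_sig (constructive_indefinite_description _ (hc a))).
by move=> a; case: (constructive_indefinite_description _ (hc a)).
Qed.

Lemma OL_scale (K : fieldType) (v : K -> int) (L : fieldExtType K) (a : K) (x : L) :
  is_dval v -> a \in OK v -> OL v x -> OL v (a *: x).
Proof.
move=> hv ha hx; have [d [hd [c hc]]] := OL_fun hv hx.
apply: (@dettrick K v L d (\matrix_(i, j) (a * c i.+1 j)) (fun i => x ^+ i) (Ordinal hd)) => //.
- by move=> i j; rewrite mxE OKM //; case: (hc i.+1).
- move=> i; rewrite -scalerAl -exprS (proj2 (hc i.+1)) scaler_sumr.
  by apply: eq_bigr => j _; rewrite mxE scalerA.
Qed.

Lemma sum_pair_l (K : fieldType) (L : fieldExtType K) dx dy (c : 'I_dx -> K)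
  (g : 'I_dx * 'I_dy -> L) (j : 'I_dy) :
  \sum_(k : 'I_dx * 'I_dy) (if k.2 == j then c k.1 else 0) *: g k = \sum_i c i *: g (i, j).
Proof.
rewrite (eq_bigr (fun k => (fun i j' => (if j' == j then c i else 0) *: g (i, j')) k.1 k.2)); last by case.
rewrite -(pair_bigA _ (fun i j' => (if j' == j then c i else 0) *: g (i, j'))) /=.
apply: eq_bigr => i _; rewrite (bigD1 j) //= eqxx big1 ?addr0 // => j' hj.
by rewrite (negbTE hj) scale0r.
Qed.

Lemma sum_pair_r (K : fieldType) (L : fieldExtType K) dx dy (c : 'I_dy -> K)
  (g : 'I_dx * 'I_dy -> L) (i : 'I_dx) :
  \sum_(k : 'I_dx * 'I_dy) (if k.1 == i then c k.2 else 0) *: g k = \sum_j c j *: g (i, j).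
Proof.
rewrite (eq_bigr (fun k => (fun i' j => (if i' == i then c j else 0) *: g (i', j)) k.1 k.2)); last by case.
rewrite -(pair_bigA _ (fun i' j => (if i' == i then c j else 0) *: g (i', j))) /=.
rewrite (bigD1 i) //= [X in _ + X]big1 => [|i' hi].
  by rewrite addr0; apply: eq_bigr => j _; rewrite eqxx.
by rewrite big1 // => j _; rewrite (negbTE hi) scale0r.
Qed.

Lemma OL_add (K : fieldType) (v : K -> int) (L : fieldExtType K) (x y : L) :
  is_dval v -> OL v x -> OL v y -> OL v (x + y).
Proof.
move=> hv hx hy; have [dx [hdx [cx hcx]]] := OL_fun hv hx.
have [dy [hdy [cy hcy]]] := OL_fun hv hy.
pose A (k l : 'I_dx * 'I_dy) := (if l.2 == k.2 then cx k.1.+1 l.1 else 0)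
   + (if l.1 == k.1 then cy k.2.+1 l.2 else 0).
apply: (@dettrickT K v L _ A (fun k => x ^+ k.1 * y ^+ k.2) (Ordinal hdx, Ordinal hdy)) => //.
- move=> k l; rewrite /A; apply: OKD => //.
    by case: (_ == _); rewrite ?OK0 //; case: (hcx k.1.+1).
  by case: (_ == _); rewrite ?OK0 //; case: (hcy k.2.+1).
- by rewrite /= !expr0 mulr1.
move=> [i j] /=; rewrite /A.
under eq_bigr do rewrite scalerDl.
rewrite big_split /=.
rewrite (sum_pair_l (fun i' => cx i.+1 i') (fun k => x ^+ k.1 * y ^+ k.2) j).
rewrite (sum_pair_r (fun j' => cy j.+1 j') (fun k => x ^+ k.1 * y ^+ k.2) i) /=.
rewrite mulrDl mulrA -exprS (proj2 (hcx i.+1)) mulr_suml.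
rewrite mulrCA -exprS (proj2 (hcy j.+1)) mulr_sumr; congr (_ + _).
  by apply: eq_bigr => i' _; rewrite -scalerAl.
by apply: eq_bigr => j' _; rewrite -scalerAr mulrC.
Qed.

Lemma OL_comb (K : fieldType) (v : K -> int) (L : fieldExtType K) n (c : 'I_n -> K)
  (u : 'I_n -> L) : is_dval v -> (forall i, c i \in OK v) -> (forall i, OL v (u i)) ->
  OL v (\sum_i c i *: u i).
Proof.
move=> hv hc hu; apply: (@big_ind L (fun x : L => OL v x)); first exact: OL0.
  by move=> a b; apply: OL_add.
by move=> i _; apply: OL_scale.
Qed.

Definition mO (K : fieldType) (v : K -> int) m n (A : 'M[K]_(m, n)) :=
  forall i j, A i j \in OK v.

Lemma mO_mul (K : fieldType) (v : K -> int) m n p (A : 'M[K]_(m, n)) (B : 'M[K]_(n, p)) :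
  is_dval v -> mO v A -> mO v B -> mO v (A *m B).
Proof. by move=> hv hA hB i j; rewrite mxE OKsum // => k _; rewrite OKM. Qed.

Lemma mO1 (K : fieldType) (v : K -> int) m : is_dval v -> mO v (1%:M : 'M[K]_m).
Proof. by move=> hv i j; rewrite mxE; case: (i == j); rewrite ?mulr1n ?mulr0n ?OK1 ?OK0. Qed.

Lemma mO_add (K : fieldType) (v : K -> int) m n (A B : 'M[K]_(m, n)) :
  is_dval v -> mO v A -> mO v B -> mO v (A + B).
Proof. by move=> hv hA hB i j; rewrite mxE OKD. Qed.

Lemma mO_sub (K : fieldType) (v : K -> int) m n (A B : 'M[K]_(m, n)) :
  is_dval v -> mO v A -> mO v B -> mO v (A - B).
Proof. by move=> hv hA hB i j; rewrite !mxE OKB. Qed.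

Lemma inv_right (K : fieldType) m (A B : 'M[K]_m) : A *m B = 1%:M -> invmx A = B.
Proof.
move=> h; have [hA _] := mulmx1_unit h.
by rewrite -[B]mul1mx -(mulVmx hA) -mulmxA h mulmx1.
Qed.

Lemma GL_OK1 (K : fieldType) (v : K -> int) m : is_dval v -> GL_OK v (1%:M : 'M[K]_m).
Proof.
move=> hv; split; first exact: unitmx1.
  exact: mO1.
by rewrite invmx1; apply: mO1.
Qed.

Lemma GL_OK_mul (K : fieldType) (v : K -> int) m (A B : 'M[K]_m) : is_dval v ->
  GL_OK v A -> GL_OK v B -> GL_OK v (A *m B).
Proof.
move=> hv [uA oA iA] [uB oB iB]; split.
- by rewrite unitmx_mul uA uB.
- exact: mO_mul.
have -> : invmx (A *m B) = invmx B *m invmx A.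
  apply: inv_right; by rewrite mulmxA -(mulmxA A) mulmxV // mulmx1 mulmxV.
exact: mO_mul.
Qed.

Lemma GL_OK_perm (K : fieldType) (v : K -> int) m (s : 'S_m) : is_dval v ->
  GL_OK v (perm_mx s : 'M[K]_m).
Proof.
move=> hv.
have hO : forall t : 'S_m, mO v (perm_mx t : 'M[K]_m).
  by move=> t i j; rewrite /perm_mx mxE; apply: mO1.
split; first exact: unitmx_perm.
  exact: hO.
have -> : invmx (perm_mx s : 'M[K]_m) = perm_mx s^-1.
  by apply: inv_right; rewrite -perm_mxM mulgV perm_mx1.
exact: hO.
Qed.

Lemma step_elim (K : fieldType) (v : K -> int) m n (A : 'M[K]_(m, n)) (kk : 'I_n) :
  is_dval v ->
  (forall (i : 'I_m) (j : 'I_n), (j < kk)%N -> (j < i)%N -> A i j = 0) ->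
  exists E, [/\ GL_OK v E,
    (forall (i : 'I_m) (j : 'I_n), (j < kk)%N -> (j < i)%N -> (E *m A) i j = 0) &
    (forall i : 'I_m, (kk < i)%N -> (E *m A) i kk = 0)].
Proof.
move=> hv hA.
case: (boolP [exists i : 'I_m, (kk <= i)%N && (A i kk != 0)]) => [/existsP [p0 hp0] | hno];
  last first.
  exists 1%:M; split; [exact: GL_OK1 | by move=> i j; rewrite mul1mx; apply: hA |].
  move=> i hi; rewrite mul1mx; apply/eqP; apply: contraNT hno => hne.
  by apply/existsP; exists i; rewrite hne ltnW.
pose P := [pred i : 'I_m | (kk <= i)%N && (A i kk != 0)].
have [p hPp hmin] : exists2 p, P p & forall i, P i -> v (A p kk) <= v (A i kk).
  by case: (@arg_minP _ _ _ p0 P (fun i => v (A i kk)) hp0) => i hi hmin'; exists i.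
move/andP: hPp => [hpk hpnz].
have hkm : (kk < m)%N by have := ltn_ord p; lia.
pose k' : 'I_m := Ordinal hkm.
pose s := tperm k' p.
pose A' := row_perm s A.
have hA'E : forall i j, A' i j = A (s i) j by move=> i j; rewrite mxE.
pose c := A' k' kk.
have hcE : c = A p kk by rewrite /c hA'E /s tpermL.
have hc : c != 0 by rewrite hcE.
pose mu i := A' i kk / c.
have hmu : forall i : 'I_m, (kk < i)%N -> mu i \in OK v.
  move=> i hi; rewrite /mu hA'E.
  have [h0|hnz] := eqVneq (A (s i) kk) 0; first by rewrite h0 mul0r OK0.
  have hPs : P (s i).
    rewrite inE hnz andbT /s.
    by case: tpermP => [_|_|_ _] /=; [exact: hpk | exact: leqnn | exact: ltnW].
  have := hmin _ hPs; rewrite -hcE => hle.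
  rewrite OKP dval_mul // ?invr_eq0 // vV // orbC -subr_ge0 in hle *.
  by rewrite hle.
pose N := \matrix_(i, j) (if (kk < i)%N && (j == k') then mu i else 0) : 'M[K]_m.
have hNE : forall i j, N i j = if (kk < i)%N && (j == k') then mu i else 0.
  by move=> i j; rewrite mxE.
have hNN : N *m N = 0.
  apply/matrixP => i j; rewrite !mxE big1 // => l _.
  rewrite !hNE; case: (eqVneq l k') => [->|hl]; last by rewrite andbF mul0r.
  by rewrite /= ltnn mulr0.
have hNO : mO v N.
  move=> i j; rewrite hNE; case: ifP => [/andP [hi _]|_]; [exact: hmu | exact: OK0].
have hGL : GL_OK v (1%:M - N).
  have hinv : (1%:M - N) *m (1%:M + N) = 1%:M.
    by rewrite mulmxBl !mul1mx mulmxDr mulmx1 hNN addr0 addrK.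
  have [hu _] := mulmx1_unit hinv.
  split => //.
  - by apply: mO_sub => //; apply: mO1.
  - by rewrite (inv_right hinv); apply: mO_add => //; apply: mO1.
exists ((1%:M - N) *m perm_mx s); split.
- by apply: GL_OK_mul => //; apply: GL_OK_perm.
- move=> i j hj hji.
  have hz : forall l : 'I_m, (j < l)%N -> A' l j = 0.
    move=> l hl; rewrite hA'E; apply: hA => //.
    by rewrite /s; case: tpermP => [_|_|_ _] /=; lia.
  rewrite -mulmxA -row_permE -/A' mulmxBl mul1mx !mxE (bigD1 k') //= big1.
    rewrite hNE eqxx andbT; have hzi := hz i hji; rewrite hA'E in hzi; rewrite hzi (hz k') /=; [by rewrite mulr0 addr0 subr0 | lia].
  by move=> l hl; rewrite hNE (negbTE hl) andbF mul0r.
- move=> i hi.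
  rewrite -mulmxA -row_permE -/A' mulmxBl mul1mx !mxE (bigD1 k') //= big1.
    by rewrite hNE eqxx andbT hi addr0 /mu -/c mulfVK // hA'E subrr.
  by move=> l hl; rewrite hNE (negbTE hl) andbF mul0r.
Qed.

Lemma elim_exists (K : fieldType) (v : K -> int) m n (M : 'M[K]_(m, n)) : is_dval v ->
  exists U, GL_OK v U /\ forall (i : 'I_m) (j : 'I_n), (j < i)%N -> (U *m M) i j = 0.
Proof.
move=> hv.
suff : forall k, (k <= n)%N -> exists U, GL_OK v U /\
    forall (i : 'I_m) (j : 'I_n), (j < k)%N -> (j < i)%N -> (U *m M) i j = 0.
  move=> /(_ n (leqnn n)) [U [hU hz]]; exists U; split => // i j; exact: hz.
elim=> [|k IH] hk.
  by exists 1%:M; split => //; exact: GL_OK1.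
have [U [hU hz]] := IH (ltnW hk).
have [E [hE h1 h2]] := step_elim (kk := Ordinal hk) hv hz.
exists (E *m U); split; first exact: GL_OK_mul.
move=> i j hj hji; rewrite -mulmxA.
have [hjk|hjk] := ltnP j k; first exact: h1.
have -> : j = Ordinal hk by apply: val_inj => /=; lia.
apply: h2 => /=; lia.
Qed.

Lemma lin0 (K : fieldType) (V W : lmodType K) (f : V -> W) : is_linearK f -> f 0 = 0.
Proof.
move=> hf; have := hf 1 0 0; rewrite scale1r addr0 scale1r => h.
by apply: (@addrI _ (f 0)); rewrite addr0 -h.
Qed.

Lemma linsum (K : fieldType) (V W : lmodType K) (f : V -> W) : is_linearK f ->
  forall m (a : 'I_m -> K) (u : 'I_m -> V), f (\sum_i a i *: u i) = \sum_i a i *: f (u i).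
Proof.
move=> hf m a u.
apply: (big_rec2 (fun s t => f s = t)); first exact: lin0.
by move=> i y1 y2 _ <-; rewrite hf.
Qed.

Definition castD (K : fieldType) n (D : 'M[K]_n) : 'M[K]_(n * n, n) :=
  castmx (subnKC (leq_n_nn n), erefl n) (col_mx D (0 : 'M_(n * n - n, n))).

Lemma castD_lt (K : fieldType) n (D : 'M[K]_n) (r : 'I_(n * n)) c (hr : (r < n)%N) :
  castD D r c = D (Ordinal hr) c.
Proof.
rewrite /castD castmxE /=.
have -> : cast_ord (esym (subnKC (leq_n_nn n))) r = lshift (n * n - n) (Ordinal hr).
  by apply: val_inj.
have -> : cast_ord (esym (erefl n)) c = c by apply: val_inj.
by rewrite col_mxEu.
Qed.

Lemma castD_ge (K : fieldType) n (D : 'M[K]_n) (r : 'I_(n * n)) c :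
  (n <= r)%N -> castD D r c = 0.
Proof.
move=> hr; rewrite /castD castmxE /=.
have hr' : (r - n < n * n - n)%N by have := ltn_ord r; lia.
have -> : cast_ord (esym (subnKC (leq_n_nn n))) r = rshift n (Ordinal hr').
  by apply: val_inj => /=; lia.
by rewrite col_mxEd mxE.
Qed.

Lemma castDx_lt (K : fieldType) n (D : 'M[K]_n) p (x : 'M[K]_(n, p)) (r : 'I_(n * n)) c
  (hr : (r < n)%N) : (castD D *m x) r c = (D *m x) (Ordinal hr) c.
Proof. by rewrite !mxE; apply: eq_bigr => k _; rewrite (castD_lt _ _ hr). Qed.

Lemma castDx_ge (K : fieldType) n (D : 'M[K]_n) p (x : 'M[K]_(n, p)) (r : 'I_(n * n)) c :
  (n <= r)%N -> (castD D *m x) r c = 0.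
Proof. by move=> hr; rewrite !mxE big1 // => k _; rewrite castD_ge // mul0r. Qed.

Lemma reduced_equiv (K : fieldType) (v : K -> int) n (M : 'M[K]_(n * n, n)) (D : 'M[K]_n)
  (U : 'M[K]_(n * n)) : is_dval v -> GL_OK v U -> U *m M = castD D ->
  forall x : 'cV[K]_n, mO v (M *m x) <-> mO v (D *m x).
Proof.
move=> hv [hu hUO hUi] hUM x; split => hx.
  move=> i j.
  have hr : (widen_ord (leq_n_nn n) i < n)%N by exact: (ltn_ord i).
  have -> : (D *m x) i j = (castD D *m x) (widen_ord (leq_n_nn n) i) j.
    rewrite (castDx_lt _ _ _ hr).
    by have -> : Ordinal hr = i by apply: val_inj.
  by rewrite -hUM -mulmxA; apply: mO_mul.
have -> : M *m x = invmx U *m (castD D *m x) by rewrite -hUM -mulmxA mulKmx.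
apply: mO_mul => // r j.
have [hr|hr] := ltnP r n; first by rewrite (castDx_lt _ _ _ hr).
by rewrite castDx_ge // OK0.
Qed.

Lemma reduced_ker (K : fieldType) (v : K -> int) n (M : 'M[K]_(n * n, n)) (D : 'M[K]_n)
  (U : 'M[K]_(n * n)) : GL_OK v U -> U *m M = castD D ->
  forall x : 'cV[K]_n, D *m x = 0 -> M *m x = 0.
Proof.
move=> [hu _ _] hUM x hx.
have -> : M *m x = invmx U *m (castD D *m x) by rewrite -hUM -mulmxA mulKmx.
have -> : castD D *m x = 0.
  apply/matrixP => r j; rewrite [RHS]mxE.
  have [hr|hr] := ltnP r n; first by rewrite (castDx_lt _ _ _ hr) hx mxE.
  by rewrite castDx_ge.
by rewrite mulmx0.
Qed.

Lemma elim_reduced (K : fieldType) (v : K -> int) n (M : 'M[K]_(n * n, n)) (U : 'M[K]_(n * n)) :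
  (forall (i : 'I_(n * n)) (j : 'I_n), (j < i)%N -> (U *m M) i j = 0) ->
  U *m M = castD (\matrix_(i, j) (U *m M) (widen_ord (leq_n_nn n) i) j).
Proof.
move=> hz; apply/matrixP => r c.
have [hr|hr] := ltnP r n.
  rewrite (castD_lt _ _ hr) [RHS]mxE.
  by have -> : widen_ord (leq_n_nn n) (Ordinal hr) = r by apply: val_inj.
rewrite castD_ge // hz //; have := ltn_ord c; lia.
Qed.

Lemma det_OK (K : fieldType) (v : K -> int) n (A : 'M[K]_n) : is_dval v -> mO v A ->
  \det A \in OK v.
Proof.
move=> hv hA; apply: (det_closed (S := fun x => x \in OK v)) => //.
- exact: OK1.
- by move=> x; apply: OKN.
- by move=> x y; apply: OKD.
- by move=> x y; apply: OKM.
Qed.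

Lemma mO_inv (K : fieldType) (v : K -> int) n (A : 'M[K]_n) : is_dval v -> mO v A ->
  \det A != 0 -> v (\det A) = 0 -> mO v (invmx A).
Proof.
move=> hv hA hd hvd.
have hu : A \in unitmx by rewrite unitmxE unitfE.
rewrite /invmx hu => i j; rewrite !mxE; apply: OKM => //.
  by rewrite OKP invr_eq0 (negbTE hd) /= vV // hvd.
rewrite /cofactor; apply: OKM => //; first by apply: OKX => //; apply: OKN => //; apply: OK1.
by apply: det_OK => // a b; rewrite !mxE.
Qed.

Lemma mO_cols (K : fieldType) (v : K -> int) m n (A : 'M[K]_(m, n)) :
  (forall j, mO v (A *m (delta_mx j 0 : 'cV[K]_n))) -> mO v A.
Proof. by move=> h i j; have := h j i 0; rewrite -colE mxE. Qed.

Lemma mO_delta (K : fieldType) (v : K -> int) n (j : 'I_n) : is_dval v ->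
  mO v (delta_mx j 0 : 'cV[K]_n).
Proof. by move=> hv a b; rewrite mxE OKnat. Qed.

Lemma mO_scale (K : fieldType) (v : K -> int) m n (c : K) (A : 'M[K]_(m, n)) :
  is_dval v -> c \in OK v -> mO v A -> mO v (c *: A).
Proof. by move=> hv hc hA i j; rewrite mxE OKM. Qed.
Unset Implicit Arguments.

Theorem mainTheorem2 (K : fieldType) (v : K -> int) (L : fieldExtType K)
    (H : falgType K) (n : nat)
    (Delta : H -> 'M[K]_(\dim (fullv : {vspace H}))) (eps : H -> K) (S : H -> H)
    (act : H -> L -> L) (W : n.-tuple H) (B : n.-tuple L) (beta : L) :
  is_dval v ->
  \dim (fullv : {vspace L}) = n ->
  separable 1%VS (fullv : {vspace L}) ->
  HopfGalois Delta eps S act ->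
  basis_of fullv W ->
  OK_basis v B ->
  OL v beta ->
  (free_generator v act beta <->
   exists D : 'M[K]_n, reduced_matrix v (action_matrix act W B) D /\
     \det (Mbeta act W B beta) != 0 /\
     v (\det (Mbeta act W B beta)) = v (\det D)).
Proof.
move=> hv hdimL _ hHG hW hB hbeta.
case: hHG => _ hlinl hlinr _ _ _ _ _ _.
case: hB => hBOL hBspan hBind.
have [pi [hpi vpi]] := unif hv.
have hBn : forall i : 'I_n, B`_i = tnth B i by move=> i; rewrite (tnth_nth 0).
have hWn : forall i : 'I_n, W`_i = tnth W i by move=> i; rewrite (tnth_nth 0).
have hBfree : free B.
  apply/freeP => k hk i.
  have [N hN] := scale_OK k hv hpi vpi.
  have := hBind (fun j => pi ^+ N * k j) hN.
  have -> : \sum_j (pi ^+ N * k j) *: tnth B j = pi ^+ N *: \sum_j k j *: B`_j.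
    by rewrite scaler_sumr; apply: eq_bigr => j _; rewrite scalerA hBn.
  rewrite hk scaler0 => /(_ erefl i) /eqP; rewrite mulf_eq0 expf_eq0 (negbTE hpi) andbF /=.
  by move/eqP.
have hBbasis : basis_of fullv B.
  by rewrite basisEfree hBfree subvf size_tuple hdimL leqnn.
have coordB : forall y, y = \sum_j coord B j y *: tnth B j.
  move=> y; rewrite {1}(coord_basis hBbasis (memvf y)).
  by apply: eq_bigr => j _; rewrite hBn.
have coordB_inj : forall y1 y2, (forall k, coord B k y1 = coord B k y2) -> y1 = y2.
  move=> y1 y2 h; rewrite (coordB y1) (coordB y2).
  by apply: eq_bigr => j _; rewrite h.
have coordBsum : forall (a : 'I_n -> K) k, coord B k (\sum_j a j *: tnth B j) = a k.
  move=> a k; rewrite -(coord_sum_free a k hBfree).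
  by congr (coord B k _); apply: eq_bigr => j _; rewrite hBn.
have OLcoord : forall y, OL v y -> forall k, coord B k y \in OK v.
  move=> y hy k; have [a [ha ->]] := hBspan y hy.
  by rewrite coordBsum.
have OLofcoord : forall y, (forall k, coord B k y \in OK v) -> OL v y.
  move=> y hy; rewrite (coordB y); exact: OL_comb.
have hWfree : free W := basis_free hW.
pose hx (x : 'cV[K]_n) := \sum_i x i 0 *: tnth W i.
pose cW (h : H) : 'cV[K]_n := \col_i coord W i h.
have coordW : forall h, hx (cW h) = h.
  move=> h; rewrite {2}(coord_basis hW (memvf h)) /hx.
  by apply: eq_bigr => i _; rewrite mxE hWn.
have coordWhx : forall x i, coord W i (hx x) = x i 0.
  move=> x i; rewrite -(coord_sum_free (fun i => x i 0) i hWfree).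
  by congr (coord W i _); apply: eq_bigr => j _; rewrite hWn.
have hx_inj : forall x, hx x = 0 -> x = 0.
  move=> x h; apply/matrixP => i j; rewrite (ord1 j) mxE -coordWhx h.
  exact: linear0.
have act_hx : forall x y, act (hx x) y = \sum_i x i 0 *: act (tnth W i) y.
  by move=> x y; rewrite /hx (linsum (hlinl y)).
have act_r : forall h (a : 'I_n -> K), act h (\sum_j a j *: tnth B j) = \sum_j a j *: act h (tnth B j).
  by move=> h a; rewrite (linsum (hlinr h)).
have act0 : forall y, act 0 y = 0 by move=> y; apply: (lin0 (hlinl y)).
have hAO0 : assoc_order v act 0 by move=> y _; rewrite act0; apply: OL0.
pose M := action_matrix act W B.
pose Mb := Mbeta act W B beta.
have hMx : forall x j k, (M *m x) (mxvec_index j k) 0 = coord B k (act (hx x) (tnth B j)).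
  move=> x j k; rewrite act_hx linear_sum /= mxE.
  apply: eq_bigr => i _; rewrite linearZ /= /M /action_matrix mxE mxvecE mxE.
  by rewrite mulrC.
have hMbx : forall x k, (Mb *m x) k 0 = coord B k (act (hx x) beta).
  move=> x k; rewrite act_hx linear_sum /= mxE.
  apply: eq_bigr => i _; rewrite linearZ /= /Mb /Mbeta mxE.
  by rewrite mulrC.
have AO : forall x, assoc_order v act (hx x) <-> mO v (M *m x).
  move=> x; split.
    move=> hA r j0; rewrite (ord1 j0); case/mxvec_indexP: r => j k.
    by rewrite hMx; apply: OLcoord; apply: hA.
  move=> hO y hy; have [a [ha ->]] := hBspan y hy.
  rewrite act_r; apply: OL_comb => // j.
  by apply: OLofcoord => k; rewrite -hMx.
have actcoord0 : forall h, (forall j, act h (tnth B j) = 0) -> forall y, act h y = 0.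
  move=> h hj y; rewrite (coordB y) act_r big1 // => j _.
  by rewrite hj scaler0.
have hcoord0 : forall y, (forall k, coord B k y = 0) -> y = 0.
  move=> y h; apply: coordB_inj => k; rewrite h; exact/esym/linear0.
split; last first.
  move=> [D [[hDu [U [hU hUM]]] [hdet hval]]].
  have hUM' : U *m M = castD D by exact: hUM.
  have hLam := reduced_equiv hv hU hUM'.
  have hMbu : Mb \in unitmx by rewrite unitmxE unitfE.
  have hdetD : \det D != 0 by rewrite -unitfE -unitmxE.
  pose P := Mb *m invmx D.
  have hPO : mO v P.
    apply: mO_cols => j; rewrite /P -mulmxA.
    set x := invmx D *m delta_mx j 0.
    have hDx : mO v (D *m x) by rewrite /x mulKVmx //; apply: mO_delta.
    have hAx : assoc_order v act (hx x) by apply/AO/hLam.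
    move=> k j0; rewrite (ord1 j0) hMbx; apply: OLcoord; exact: hAx _ hbeta.
  have hdetP : \det P = \det Mb / \det D by rewrite det_mulmx det_inv.
  have hdetP0 : \det P != 0 by rewrite hdetP mulf_neq0 // invr_eq0.
  have hvP : v (\det P) = 0 by rewrite hdetP dval_mul // ?invr_eq0 // vV // hval subrr.
  have hPinv : invmx P = D *m invmx Mb.
    by apply: inv_right; rewrite /P -mulmxA (mulmxA (invmx D)) mulVmx // mul1mx mulmxV.
  have hPiO : mO v (invmx P) := mO_inv hv hPO hdetP0 hvP.
  split.
  - move=> h hh; exact: hh _ hbeta.
  - move=> h1 h2 _ _ heq; rewrite -(coordW h1) -(coordW h2); congr hx.
    rewrite -(mulKmx hMbu (cW h1)) -(mulKmx hMbu (cW h2)); congr (_ *m _).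
    by apply/matrixP => k j0; rewrite (ord1 j0) !hMbx !coordW heq.
  - move=> y hy; pose c : 'cV[K]_n := \col_k coord B k y.
    pose x := invmx Mb *m c.
    have hDx : mO v (D *m x).
      by rewrite /x mulmxA -hPinv; apply: mO_mul => // k j0; rewrite mxE OLcoord.
    exists (hx x); first by apply/AO/hLam.
    by apply: coordB_inj => k; rewrite -hMbx /x mulmxA mulmxV // mul1mx mxE.
move=> [fg1 fg2 fg3].
have [U [hU hz]] := elim_exists M hv.
pose D := \matrix_(i, j) (U *m M) (widen_ord (leq_n_nn n) i) j.
have hUM : U *m M = castD D := elim_reduced v hz.
have hLam := reduced_equiv hv hU hUM.
have core : forall x, assoc_order v act (hx x) -> act (hx x) beta = 0 -> x = 0.
  by move=> x hA h0; apply: hx_inj; apply: fg2 => //; rewrite h0 act0.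
have hdetMb : \det Mb != 0.
  apply/negP => /eqP h0.
  have /det0P [u hu0 hu] : \det Mb^T == 0 by rewrite det_tr h0.
  pose x := u^T.
  have hMx0 : Mb *m x = 0 by rewrite /x -[Mb]trmxK -trmx_mul hu trmx0.
  have [N hN] := scale_OK (fun i => (D *m x) i 0) hv hpi vpi.
  pose x' := pi ^+ N *: x.
  have hDx' : mO v (D *m x') by rewrite /x' -scalemxAr => i j0; rewrite (ord1 j0) mxE hN.
  have hAx' : assoc_order v act (hx x') by apply/AO/hLam.
  have : x' = 0.
    by apply: core => //; apply: hcoord0 => k; rewrite -hMbx /x' -scalemxAr hMx0 scaler0 mxE.
  move/eqP; rewrite /x' scaler_eq0 expf_eq0 (negbTE hpi) andbF /= => /eqP hx0.
  by move: hu0; rewrite -(trmxK u) -/x hx0 trmx0 eqxx.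
have hMbu : Mb \in unitmx by rewrite unitmxE unitfE.
have hdetD : \det D != 0.
  apply/negP => /eqP h0.
  have /det0P [u hu0 hu] : \det D^T == 0 by rewrite det_tr h0.
  pose x := u^T.
  have hDx0 : D *m x = 0 by rewrite /x -[D]trmxK -trmx_mul hu trmx0.
  have hMx0 : M *m x = 0 := reduced_ker hU hUM hDx0.
  have hA : assoc_order v act (hx x) by apply/AO; rewrite hMx0 => i j; rewrite mxE OK0.
  have : x = 0.
    apply: core => //; apply: actcoord0 => j; apply: hcoord0 => k.
    by rewrite -hMx hMx0 mxE.
  by move=> hx0; move: hu0; rewrite -(trmxK u) -/x hx0 trmx0 eqxx.
have hDu : D \in unitmx by rewrite unitmxE unitfE.
pose P := Mb *m invmx D.
have hPO : mO v P.
  apply: mO_cols => j; rewrite /P -mulmxA.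
  set x := invmx D *m delta_mx j 0.
  have hDx : mO v (D *m x) by rewrite /x mulKVmx //; apply: mO_delta.
  have hAx : assoc_order v act (hx x) by apply/AO/hLam.
  move=> k j0; rewrite (ord1 j0) hMbx; apply: OLcoord; exact: fg1 _ hAx.
pose Q := D *m invmx Mb.
have hQO : mO v Q.
  apply: mO_cols => j; rewrite /Q -mulmxA.
  set x := invmx Mb *m delta_mx j 0.
  have [h hh hhb] := fg3 _ (hBOL j).
  have hcW : cW h = x.
    rewrite /x -(mulKmx hMbu (cW h)); congr (_ *m _).
    by apply/matrixP => k j0; rewrite (ord1 j0) hMbx coordW hhb -hBn coord_free // mxE eqxx andbT eq_sym.
  rewrite -hcW; apply/hLam/AO; rewrite coordW; exact: hh.
have hPQ : P *m Q = 1%:M.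
  by rewrite /P /Q -mulmxA (mulmxA (invmx D)) mulVmx // mul1mx mulmxV.
have hdPQ : \det P * \det Q = 1 by rewrite -det_mulmx hPQ det1.
have hdP0 : \det P != 0.
  by apply/eqP => h; move: hdPQ; rewrite h mul0r => /eqP; rewrite eq_sym oner_eq0.
have hdQ0 : \det Q != 0.
  by apply/eqP => h; move: hdPQ; rewrite h mulr0 => /eqP; rewrite eq_sym oner_eq0.
have hvP : v (\det P) = 0.
  have := dval_mul hv hdP0 hdQ0; rewrite hdPQ (v1 hv).
  have := det_OK hv hPO; rewrite OKP (negbTE hdP0) /=.
  have := det_OK hv hQO; rewrite OKP (negbTE hdQ0) /=.
  move: (v (\det P)) (v (\det Q)) => a b; lia.
exists D; split; first by split => //; exists U; split.
split => //.
have : v (\det P) = v (\det Mb) - v (\det D).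
  by rewrite /P det_mulmx det_inv dval_mul // ?invr_eq0 // vV.
by rewrite hvP => /eqP; rewrite eq_sym subr_eq0 => /eqP.
Qed.
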